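(* Let $X$ be a real Banach lattice and let $A \subseteq X$ be a solid set. Then an element $a \in A$ is an extreme point of $A$ if and only if $|a|$ is an order extreme point of $A$.
   Context: A set $C\subseteq X$ is solid if whenever $x\in X$, $z\in C$ and $|x|\le |z|$, then $x\in C$. For $A \subseteq X$, a point $a\in A$ is an order extreme point of $A$ if for all $x_0,x_1\in A$ and $t\in(0,1)$, the inequality $a\le (1-t)x_0+tx_1$ implies $x_0=a=x_1$. Extreme points are meant in the usual (convexity) sense. *)

(* Defs.v *)
From Stdlib Require Import Reals.
Open Scope R_scope.

Set Implicit Arguments.

Record BanachLattice := {
  carrier :> Type;
  vadd : carrier -> carrier -> carrier;
  vzero : carrier;
  vopp : carrier -> carrier;
  vscal : R -> carrier -> carrier;
  vle : carrier -> carrier -> Prop;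
  vjoin : carrier -> carrier -> carrier;
  vnorm : carrier -> R;
  vaddA : forall x y z, vadd x (vadd y z) = vadd (vadd x y) z;
  vaddC : forall x y, vadd x y = vadd y x;
  vadd0 : forall x, vadd x vzero = x;
  vaddN : forall x, vadd x (vopp x) = vzero;
  vscal1 : forall x, vscal 1 x = x;
  vscalA : forall s t x, vscal s (vscal t x) = vscal (s * t) x;
  vscalDr : forall t x y, vscal t (vadd x y) = vadd (vscal t x) (vscal t y);
  vscalDl : forall s t x, vscal (s + t) x = vadd (vscal s x) (vscal t x);
  vle_refl : forall x, vle x x;
  vle_anti : forall x y, vle x y -> vle y x -> x = y;
  vle_trans : forall x y z, vle x y -> vle y z -> vle x z;
  vle_add : forall x y z, vle x y -> vle (vadd x z) (vadd y z);
  vle_scal : forall t x y, 0 <= t -> vle x y -> vle (vscal t x) (vscal t y);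
  vjoin_l : forall x y, vle x (vjoin x y);
  vjoin_r : forall x y, vle y (vjoin x y);
  vjoin_lub : forall x y z, vle x z -> vle y z -> vle (vjoin x y) z;
  vnorm_ge0 : forall x, 0 <= vnorm x;
  vnorm_eq0 : forall x, vnorm x = 0 -> x = vzero;
  vnorm_scal : forall t x, vnorm (vscal t x) = Rabs t * vnorm x;
  vnorm_triangle : forall x y, vnorm (vadd x y) <= vnorm x + vnorm y;
  vnorm_lattice : forall x y,
    vle (vjoin x (vopp x)) (vjoin y (vopp y)) -> vnorm x <= vnorm y;
  vcomplete : forall u : nat -> carrier,
    (forall eps, 0 < eps -> exists N, forall m n, (N <= m)%nat -> (N <= n)%nat ->
        vnorm (vadd (u m) (vopp (u n))) < eps) ->
    exists l, forall eps, 0 < eps -> exists N, forall n, (N <= n)%nat ->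
        vnorm (vadd (u n) (vopp l)) < eps
}.

Section Defs.
Variable X : BanachLattice.

Definition vabs (x : X) : X := vjoin X x (vopp X x).

Definition convex_comb (t : R) (x0 x1 : X) : X :=
  vadd X (vscal X (1 - t) x0) (vscal X t x1).

Definition solid (C : X -> Prop) : Prop :=
  forall x z, C z -> vle X (vabs x) (vabs z) -> C x.

Definition extreme_point (A : X -> Prop) (a : X) : Prop :=
  A a /\ forall x0 x1 t, A x0 -> A x1 -> 0 < t < 1 ->
    a = convex_comb t x0 x1 -> x0 = a /\ a = x1.

Definition order_extreme_point (A : X -> Prop) (a : X) : Prop :=
  A a /\ forall x0 x1 t, A x0 -> A x1 -> 0 < t < 1 ->
    vle X a (convex_comb t x0 x1) -> x0 = a /\ a = x1.

End Defs.
Arguments vabs : clear implicits.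
Arguments convex_comb : clear implicits.
Arguments solid : clear implicits.
Arguments extreme_point : clear implicits.
Arguments order_extreme_point : clear implicits.

(* Main.v *)
Require Import Defs.
From Stdlib Require Import Reals.
From Stdlib Require Import Lra List.
Open Scope R_scope.
Set Implicit Arguments.
Unset Strict Implicit.
From Stdlib Require Import Lia.

Inductive vexp := VAt (n:nat) | VZ | VAdd (e1 e2 : vexp) | VOpp (e : vexp) | VSc (r:R) (e : vexp).

Fixpoint vden (X : BanachLattice) (env : list X) (e : vexp) : X :=
  match e with
  | VAt n => nth n env (vzero X)
  | VZ => vzero X
  | VAdd a b => vadd X (vden env a) (vden env b)
  | VOpp a => vopp X (vden env a)
  | VSc r a => vscal X r (vden env a)
  end.

Fixpoint coef (e : vexp) (i : nat) : R :=
  match e with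
  | VAt n => if Nat.eqb n i then 1 else 0
  | VZ => 0
  | VAdd a b => coef a i + coef b i
  | VOpp a => - coef a i
  | VSc r a => r * coef a i
  end.

Fixpoint sumc (X : BanachLattice) (f : nat -> R) (k : nat) (l : list X) : X :=
  match l with
  | nil => vzero X
  | x :: l' => vadd X (vscal X (f k) x) (sumc f (S k) l')
  end.

Lemma addNl (X : BanachLattice) (x : X) : vadd X (vopp X x) x = vzero X.
Proof. rewrite vaddC; apply vaddN. Qed.
Lemma add0l (X : BanachLattice) (x : X) : vadd X (vzero X) x = x.
Proof. rewrite vaddC; apply vadd0. Qed.
Lemma addcr (X : BanachLattice) (x y z : X) : vadd X x z = vadd X y z -> x = y.
Proof. intro H. rewrite <- (vadd0 X x), <- (vadd0 X y), <- (vaddN X z), !vaddA, H; reflexivity. Qed.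
Lemma scal0l (X : BanachLattice) (x : X) : vscal X 0 x = vzero X.
Proof. apply (@addcr X _ _ (vscal X 0 x)). rewrite add0l, <- vscalDl. f_equal; ring. Qed.
Lemma scal0r (X : BanachLattice) (t : R) : vscal X t (vzero X) = vzero X.
Proof. apply (@addcr X _ _ (vscal X t (vzero X))). rewrite add0l, <- vscalDr, vadd0; reflexivity. Qed.
Lemma oppE (X : BanachLattice) (x : X) : vopp X x = vscal X (-1) x.
Proof. apply (@addcr X _ _ (x)). rewrite addNl.
 assert (H: vadd X (vscal X (-1) x) (vscal X 1 x) = vzero X).
 { rewrite <- vscalDl. replace (-1+1) with 0 by ring. apply scal0l. }
 rewrite vscal1 in H. auto. Qed.
Lemma sumc_add (X : BanachLattice) f g k (l : list X) : sumc (fun i => f i + g i) k l = vadd X (sumc f k l) (sumc g k l).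
Proof. revert k; induction l as [|x l IH]; intro k; simpl.
 - rewrite vadd0; reflexivity.
 - rewrite IH, vscalDl. rewrite <- !vaddA. f_equal. rewrite !vaddA. f_equal. apply vaddC. Qed.
Lemma sumc_sc (X : BanachLattice) r f k (l : list X) : sumc (fun i => r * f i) k l = vscal X r (sumc f k l).
Proof. revert k; induction l as [|x l IH]; intro k; simpl.
 - rewrite scal0r; reflexivity.
 - rewrite IH, vscalDr, vscalA; reflexivity. Qed.
Lemma sumc_extk (X : BanachLattice) f g k (l : list X) : (forall i, (k <= i)%nat -> f i = g i) -> sumc f k l = sumc g k l.
Proof. revert k; induction l; intros k H; simpl; [reflexivity| rewrite H, IHl; auto; intros; try apply H; lia]. Qed.
Lemma sumc_ext (X : BanachLattice) f g k (l : list X) : (forall i, f i = g i) -> sumc f k l = sumc g k l.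
Proof. intro H; apply sumc_extk; auto. Qed.
Lemma sumc_zero (X : BanachLattice) k (l : list X) : sumc (fun _ => 0) k l = vzero X.
Proof. revert k; induction l; intro k; simpl; [reflexivity|rewrite IHl, scal0l, vadd0; reflexivity]. Qed.
Lemma sumc_at (X : BanachLattice) n k (l : list X) :
  sumc (fun i => if Nat.eqb (n + k) i then 1 else 0) k l = nth n l (vzero X).
Proof. revert n k; induction l as [|x l IH]; intros n k; simpl.
 - destruct n; reflexivity.
 - destruct n as [|n].
   + simpl. rewrite Nat.eqb_refl, vscal1.
     rewrite (sumc_extk (g := fun _ => 0)). rewrite sumc_zero, vadd0; reflexivity.
     intros i Hi. destruct (Nat.eqb_spec k i); auto. lia.
   + replace (S n + k)%nat with (n + S k)%nat by lia. rewrite IH.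
     replace (Nat.eqb (n + S k) k) with false. rewrite scal0l, add0l; reflexivity.
     symmetry; apply Nat.eqb_neq; lia. Qed.
Lemma vden_sumc (X : BanachLattice) (env : list X) e : vden env e = sumc (coef e) 0 env.
Proof. induction e; simpl.
 - rewrite <- (sumc_at n 0 env). apply sumc_ext; intro i. rewrite Nat.add_0_r; reflexivity.
 - symmetry; apply (sumc_zero 0 env).
 - rewrite IHe1, IHe2, <- sumc_add; reflexivity.
 - rewrite IHe, oppE, <- sumc_sc. apply sumc_ext; intro; ring.
 - rewrite IHe, <- sumc_sc; reflexivity. Qed.
Lemma sc_cong (X : BanachLattice) (r1 r2 : R) (x : X) s1 s2 : r1 = r2 -> s1 = s2 ->
  vadd X (vscal X r1 x) s1 = vadd X (vscal X r2 x) s2.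
Proof. intros -> ->; reflexivity. Qed.
Lemma vden_eq (X : BanachLattice) (env : list X) e1 e2 : sumc (coef e1) 0 env = sumc (coef e2) 0 env ->
  vden env e1 = vden env e2.
Proof. rewrite !vden_sumc; auto. Qed.

Ltac vlookup x env :=
  lazymatch env with
  | x :: _ => constr:(O)
  | _ :: ?l => let n := vlookup x l in constr:(S n)
  end.
Ltac vmem x env :=
  lazymatch env with
  | nil => constr:(false)
  | x :: _ => constr:(true)
  | _ :: ?l => vmem x l
  end.
Ltac vatoms X e env :=
  lazymatch e with
  | vadd _ ?a ?b => let env1 := vatoms X a env in vatoms X b env1
  | vopp _ ?a => vatoms X a env
  | vscal _ _ ?a => vatoms X a env
  | vzero _ => env
  | _ => let b := vmem e env in
         lazymatch b with
         | true => env
         | false => let r := eval simpl in (@app (carrier X) env (e :: nil)) in r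
         end
  end.
Ltac vreify e env :=
  lazymatch e with
  | vadd _ ?a ?b => let x := vreify a env in let y := vreify b env in constr:(VAdd x y)
  | vopp _ ?a => let x := vreify a env in constr:(VOpp x)
  | vscal _ ?r ?a => let x := vreify a env in constr:(VSc r x)
  | vzero _ => constr:(VZ)
  | _ => let n := vlookup e env in constr:(VAt n)
  end.
Ltac vring :=
  lazymatch goal with
  | |- @eq (carrier ?X) ?l ?r =>
    let env0 := vatoms X l (@nil (carrier X)) in
    let env1 := vatoms X r env0 in
    let env := eval simpl in env1 in
    let el := vreify l env in
    let er := vreify r env in
    change (vden env el = vden env er);
    apply vden_eq; simpl;
    repeat (apply sc_cong; [try ring; try field|]); try reflexivity
  end.


Lemma le_by (X : BanachLattice) (a b c d : X) :
  vle X c d -> vadd X d (vopp X c) = vadd X b (vopp X a) -> vle X a b.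
Proof. intros H E. pose proof (vle_add X _ _ (vopp X c) H) as H1.
 rewrite vaddN, E in H1. pose proof (vle_add X _ _ a H1) as H2.
 replace (vadd X (vzero X) a) with a in H2 by vring.
 replace (vadd X (vadd X b (vopp X a)) a) with b in H2 by vring. exact H2. Qed.

Lemma le_add2 (X : BanachLattice) (a b c d : X) : vle X a b -> vle X c d -> vle X (vadd X a c) (vadd X b d).
Proof. intros H1 H2. apply vle_trans with (vadd X b c). apply vle_add; auto.
 rewrite (vaddC X b c), (vaddC X b d). apply vle_add; auto. Qed.

Lemma le_opp (X : BanachLattice) (a b : X) : vle X a b -> vle X (vopp X b) (vopp X a).
Proof. intro H. apply (le_by H). vring. Qed.

Lemma le_scal_rev (X : BanachLattice) t (a b : X) : 0 < t -> vle X (vscal X t a) (vscal X t b) -> vle X a b.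
Proof. intros Ht H. apply (@vle_scal X (/t)) in H; [|left; apply Rinv_0_lt_compat; auto].
 rewrite !vscalA, Rinv_l, !vscal1 in H; auto; lra. Qed.

Lemma scal_cancel (X : BanachLattice) t (a b : X) : 0 < t -> vscal X t a = vscal X t b -> a = b.
Proof. intros Ht H. apply (f_equal (vscal X (/t))) in H.
 rewrite !vscalA, Rinv_l, !vscal1 in H; auto; lra. Qed.

Lemma join_add_le (X : BanachLattice) (p q z M : X) :
  vle X (vadd X p z) M -> vle X (vadd X q z) M -> vle X (vadd X (vjoin X p q) z) M.
Proof. intros H1 H2. assert (vle X (vjoin X p q) (vadd X M (vopp X z))).
 { apply vjoin_lub; [apply (le_by H1)|apply (le_by H2)]; vring. }
 apply (le_by H). vring. Qed.

Lemma join_scal_le (X : BanachLattice) t (p q M : X) : 0 < t ->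
  vle X (vscal X t p) M -> vle X (vscal X t q) M -> vle X (vscal X t (vjoin X p q)) M.
Proof. intros Ht H1 H2. apply (le_scal_rev (t := /t)). apply Rinv_0_lt_compat; auto.
 rewrite vscalA, Rinv_l, vscal1 by lra. apply vjoin_lub; apply (le_scal_rev (t := t)); auto;
 rewrite vscalA, Rinv_r, vscal1 by lra; auto. Qed.

Lemma abs_ge (X : BanachLattice) (x : X) : vle X x (vabs X x).
Proof. apply vjoin_l. Qed.
Lemma abs_geN (X : BanachLattice) (x : X) : vle X (vopp X x) (vabs X x).
Proof. apply vjoin_r. Qed.
Lemma abs_ge0 (X : BanachLattice) (x : X) : vle X (vzero X) (vabs X x).
Proof. pose proof (le_add2 (abs_ge x) (abs_geN x)) as H.
 apply (@vle_scal X (/2)) in H; [|lra].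
 replace (vscal X (/2) (vadd X x (vopp X x))) with (vzero X) in H by vring.
 replace (vscal X (/ 2) (vadd X (vabs X x) (vabs X x))) with (vabs X x) in H by vring. auto. Qed.
Lemma abs_le (X : BanachLattice) (y z : X) : vle X (vopp X z) y -> vle X y z -> vle X (vabs X y) z.
Proof. intros H1 H2. apply vjoin_lub; auto. apply (le_by H1). vring. Qed.
Lemma abs_nonneg (X : BanachLattice) (x : X) : vle X (vzero X) x -> vabs X x = x.
Proof. intro H. apply vle_anti; [|apply abs_ge]. apply abs_le; [|apply vle_refl].
 apply vle_trans with (vzero X); auto. apply (le_by H); vring. Qed.
Lemma abs_abs (X : BanachLattice) (x : X) : vabs X (vabs X x) = vabs X x.
Proof. apply abs_nonneg, abs_ge0. Qed.
Lemma abs_opp (X : BanachLattice) (x : X) : vabs X (vopp X x) = vabs X x.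
Proof. apply vle_anti; apply abs_le.
 - apply (le_by (abs_ge x)); vring.
 - apply abs_geN.
 - apply (le_by (abs_ge (vopp X x))); vring.
 - apply (le_by (abs_geN (vopp X x))); vring. Qed.
Lemma abs_tri (X : BanachLattice) (x y : X) : vle X (vabs X (vadd X x y)) (vadd X (vabs X x) (vabs X y)).
Proof. apply abs_le.
 - apply (le_by (le_add2 (abs_geN x) (abs_geN y))); vring.
 - apply le_add2; apply abs_ge. Qed.
Lemma abs_scal_pos (X : BanachLattice) t (x : X) : 0 <= t -> vabs X (vscal X t x) = vscal X t (vabs X x).
Proof. intro Ht. destruct (Req_dec t 0) as [->|Ht0].
 - rewrite !scal0l. apply abs_nonneg, vle_refl.
 - apply vle_anti.
   + apply abs_le.
     * apply (le_by (@vle_scal X t _ _ Ht (abs_geN x))); vring.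
     * apply vle_scal; auto; apply abs_ge.
   + apply join_scal_le; [lra|apply abs_ge|].
     apply (le_by (abs_geN (vscal X t x))); vring. Qed.
Lemma abs_scal (X : BanachLattice) t (x : X) : vabs X (vscal X t x) = vscal X (Rabs t) (vabs X x).
Proof. destruct (Rle_lt_dec 0 t).
 - rewrite Rabs_pos_eq by auto. apply abs_scal_pos; auto.
 - rewrite Rabs_left by auto. replace (vscal X t x) with (vscal X (-t) (vopp X x)) by vring.
   rewrite abs_scal_pos, abs_opp by lra. reflexivity. Qed.
Lemma abs_le0 (X : BanachLattice) (x : X) : vle X (vabs X x) (vzero X) -> x = vzero X.
Proof. intro H. apply vle_anti.
 - apply vle_trans with (vabs X x); auto; apply abs_ge.
 - apply (le_by (vle_trans X _ _ _ (abs_geN x) H)); vring. Qed.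

Definition pp (X : BanachLattice) (x : X) := vjoin X x (vzero X).
Definition np (X : BanachLattice) (x : X) := vjoin X (vopp X x) (vzero X).
Lemma pp_ge0 (X : BanachLattice) (x : X) : vle X (vzero X) (pp x).
Proof. apply vjoin_r. Qed.
Lemma np_ge0 (X : BanachLattice) (x : X) : vle X (vzero X) (np x).
Proof. apply vjoin_r. Qed.
Lemma ge_pp (X : BanachLattice) (x : X) : vle X x (pp x).
Proof. apply vjoin_l. Qed.
Lemma pp_le_abs (X : BanachLattice) (x : X) : vle X (pp x) (vabs X x).
Proof. apply vjoin_lub; [apply abs_ge|apply abs_ge0]. Qed.
Lemma np_le_abs (X : BanachLattice) (x : X) : vle X (np x) (vabs X x).
Proof. apply vjoin_lub; [apply abs_geN|apply abs_ge0]. Qed.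
Lemma pp_np_abs (X : BanachLattice) (x : X) : vadd X (pp x) (np x) = vabs X x.
Proof. apply vle_anti.
 - unfold pp at 1. apply join_add_le.
   + rewrite vaddC. unfold np at 1. apply join_add_le.
     * replace (vadd X (vopp X x) x) with (vzero X) by vring. apply abs_ge0.
     * replace (vadd X (vzero X) x) with x by vring. apply abs_ge.
   + replace (vadd X (vzero X) (np x)) with (np x) by vring. apply np_le_abs.
 - apply abs_le.
   + apply (le_by (le_add2 (pp_ge0 x) (vjoin_l X (vopp X x) (vzero X)))). unfold np. vring.
   + apply (le_by (le_add2 (ge_pp x) (np_ge0 x))). vring. Qed.
Lemma pp_np (X : BanachLattice) (x : X) : vadd X (pp x) (vopp X (np x)) = x.
Proof. assert (E: np x = vadd X (pp x) (vopp X x)).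
 { apply vle_anti.
   - apply vjoin_lub.
     + apply (le_by (pp_ge0 x)); vring.
     + apply (le_by (ge_pp x)); vring.
   - unfold pp at 1. apply join_add_le.
     + replace (vadd X x (vopp X x)) with (vzero X) by vring. apply np_ge0.
     + replace (vadd X (vzero X) (vopp X x)) with (vopp X x) by vring. apply vjoin_l. }
 rewrite E. vring. Qed.

Definition meet (X : BanachLattice) (x y : X) := vopp X (vjoin X (vopp X x) (vopp X y)).
Lemma riesz (X : BanachLattice) (c M N : X) :
  vle X (vzero X) c -> vle X c (vadd X M N) -> vle X (vzero X) M -> vle X (vzero X) N ->
  vle X (vzero X) (meet c M) /\ vle X (meet c M) M /\
  vle X (vzero X) (vadd X c (vopp X (meet c M))) /\ vle X (vadd X c (vopp X (meet c M))) N.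
Proof. intros Hc HcMN HM HN. unfold meet.
 assert (H0 : vle X (vjoin X (vopp X c) (vopp X M)) (vzero X)).
 { apply vjoin_lub; apply le_opp in Hc; apply le_opp in HM;
   [apply (le_by Hc)|apply (le_by HM)]; vring. }
 repeat split.
 - apply (le_by H0); vring.
 - apply (le_by (vjoin_r X (vopp X c) (vopp X M))). vring.
 - apply (le_by (vjoin_l X (vopp X c) (vopp X M))). vring.
 - replace (vadd X c (vopp X (vopp X (vjoin X (vopp X c) (vopp X M)))))
     with (vadd X (vjoin X (vopp X c) (vopp X M)) c) by vring.
   apply join_add_le.
   + replace (vadd X (vopp X c) c) with (vzero X) by vring; auto.
   + apply (le_by HcMN); vring. Qed.

Lemma sum_nonneg_zero (X : BanachLattice) (u w : X) :
  vle X (vzero X) u -> vle X (vzero X) w -> vle X (vadd X u w) (vzero X) -> u = vzero X.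
Proof. intros Hu Hw H. apply vle_anti; auto.
 apply (le_by (vle_trans X _ _ _ (le_add2 (vle_refl X u) Hw) H)). vring. Qed.

Lemma fwd_le (X : BanachLattice) (A : X -> Prop) (a x0 x1 : X) t :
  solid X A -> extreme_point X A a -> A x0 -> A x1 -> 0 < t < 1 ->
  vle X (vabs X a) (convex_comb X t x0 x1) -> vle X (vabs X a) (vabs X x0).
Proof.
 intros HS [Ha Hext] Hx0 Hx1 Ht H.
 set (s := 1 - t). assert (Hs : 0 < s) by (unfold s; lra).
 set (M := vscal X s (pp x0)). set (N := vscal X t (pp x1)).
 assert (HM : vle X (vzero X) M).
 { unfold M. rewrite <- (scal0r X s). apply vle_scal; [lra|apply pp_ge0]. }
 assert (HN : vle X (vzero X) N).
 { unfold N. rewrite <- (scal0r X t). apply vle_scal; [lra|apply pp_ge0]. }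
 assert (HaMN : vle X (vabs X a) (vadd X M N)).
 { apply vle_trans with (1 := H). unfold convex_comb, M, N, s.
   apply le_add2; apply vle_scal; try lra; apply ge_pp. }
 set (ap := pp a). set (an := np a).
 destruct (riesz (pp_ge0 a) (vle_trans X _ _ _ (pp_le_abs a) HaMN) HM HN)
   as [Hp0 [Hp0M [Hp1 Hp1N]]].
 fold ap in Hp0, Hp0M, Hp1, Hp1N.
 set (p0 := meet ap M) in *. set (p1 := vadd X ap (vopp X p0)) in *.
 set (M' := vadd X M (vopp X p0)). set (N' := vadd X N (vopp X p1)).
 assert (HM' : vle X (vzero X) M') by (apply (le_by Hp0M); unfold M'; vring).
 assert (HN' : vle X (vzero X) N') by (apply (le_by Hp1N); unfold N'; vring).
 assert (HanMN : vle X an (vadd X M' N')).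
 { apply (le_by HaMN). rewrite <- (pp_np_abs a). fold ap an. unfold M', N', p1. vring. }
 destruct (riesz (np_ge0 a) HanMN HM' HN') as [Hn0 [Hn0M [Hn1 Hn1N]]].
 fold an in Hn0, Hn0M, Hn1, Hn1N.
 set (n0 := meet an M') in *. set (n1 := vadd X an (vopp X n0)) in *.
 set (z0 := vscal X (/s) (vadd X p0 (vopp X n0))).
 set (z1 := vscal X (/t) (vadd X p1 (vopp X n1))).
 assert (Hpn0 : vle X (vabs X (vadd X p0 (vopp X n0))) M).
 { apply vle_trans with (1 := abs_tri _ _). rewrite abs_opp, !abs_nonneg by auto.
   apply (le_by Hn0M). unfold M'. vring. }
 assert (Hpn1 : vle X (vabs X (vadd X p1 (vopp X n1))) N).
 { apply vle_trans with (1 := abs_tri _ _). rewrite abs_opp, !abs_nonneg by auto.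
   apply (le_by Hn1N). unfold N'. vring. }
 assert (Hz0 : A z0).
 { apply (HS z0 x0 Hx0). unfold z0. rewrite abs_scal, Rabs_pos_eq by (left; apply Rinv_0_lt_compat; lra).
   apply vle_trans with (pp x0); [|apply pp_le_abs].
   apply (@vle_scal X (/s)) in Hpn0; [|left; apply Rinv_0_lt_compat; lra].
   unfold M in Hpn0. rewrite vscalA, Rinv_l, vscal1 in Hpn0 by lra. exact Hpn0. }
 assert (Hz1 : A z1).
 { apply (HS z1 x1 Hx1). unfold z1. rewrite abs_scal, Rabs_pos_eq by (left; apply Rinv_0_lt_compat; lra).
   apply vle_trans with (pp x1); [|apply pp_le_abs].
   apply (@vle_scal X (/t)) in Hpn1; [|left; apply Rinv_0_lt_compat; lra].
   unfold N in Hpn1. rewrite vscalA, Rinv_l, vscal1 in Hpn1 by lra. exact Hpn1. }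
 assert (Ea : a = convex_comb X t z0 z1).
 { unfold convex_comb, z0, z1, n1, p1. rewrite <- (pp_np a) at 1. fold ap an.
   fold s. vring; unfold s in *; lra. }
 destruct (Hext z0 z1 t Hz0 Hz1 Ht Ea) as [E0 _].
 assert (E0' : vscal X s a = vadd X p0 (vopp X n0)).
 { rewrite <- E0. unfold z0. vring; unfold s; lra. }
 apply vle_trans with (pp x0); [|apply pp_le_abs].
 apply (le_scal_rev (t := s)); auto.
 rewrite <- abs_scal_pos by lra. rewrite E0'. exact Hpn0.
Qed.

Lemma dtrick (X : BanachLattice) (A : X -> Prop) (a x : X) :
  solid X A -> extreme_point X A a -> A x -> vle X (vabs X a) (vabs X x) -> vabs X x = vabs X a.
Proof.
 intros HS [Ha Hext] Hx H.
 set (d := vadd X (vabs X x) (vopp X (vabs X a))).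
 assert (Hd : vle X (vzero X) d) by (apply (le_by H); unfold d; vring).
 assert (Hy0 : A (vadd X a d)).
 { apply (HS _ x Hx). apply vle_trans with (1 := abs_tri _ _).
   rewrite (abs_nonneg Hd). unfold d. replace (vadd X (vabs X a) (vadd X (vabs X x) (vopp X (vabs X a))))
   with (vabs X x) by vring. apply vle_refl. }
 assert (Hy1 : A (vadd X a (vopp X d))).
 { apply (HS _ x Hx). apply vle_trans with (1 := abs_tri _ _).
   rewrite abs_opp, (abs_nonneg Hd). unfold d. replace (vadd X (vabs X a) (vadd X (vabs X x) (vopp X (vabs X a))))
   with (vabs X x) by vring. apply vle_refl. }
 assert (E : a = convex_comb X (/2) (vadd X a d) (vadd X a (vopp X d))).
 { unfold convex_comb. vring. }
 assert (Hh : 0 < /2 < 1) by lra.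
 destruct (Hext _ _ _ Hy0 Hy1 Hh E) as [E0 _].
 assert (d = vzero X).
 { replace d with (vadd X (vadd X a d) (vopp X a)) by vring. rewrite E0. vring. }
 replace (vabs X x) with (vadd X d (vabs X a)) by (unfold d; vring).
 rewrite H0. vring.
Qed.


Unset Implicit Arguments.
Set Strict Implicit.

Theorem mainTheorem1 (X : BanachLattice) (A : X -> Prop) (a : X) :
  solid X A -> A a ->
  (extreme_point X A a <-> order_extreme_point X A (vabs X a)).
Proof.
 intros HS Ha. split.
 - intro Hext. split.
   + apply (HS _ a Ha). rewrite abs_abs. apply vle_refl.
   + intros x0 x1 t Hx0 Hx1 Ht H.
     assert (H0 := fwd_le HS Hext Hx0 Hx1 Ht H).
     assert (H' : vle X (vabs X a) (convex_comb X (1 - t) x1 x0)).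
     { replace (convex_comb X (1 - t) x1 x0) with (convex_comb X t x0 x1) by
         (unfold convex_comb; vring). exact H. }
     assert (Ht' : 0 < 1 - t < 1) by lra.
     assert (H1 := fwd_le HS Hext Hx1 Hx0 Ht' H').
     assert (E0 := dtrick HS Hext Hx0 H0).
     assert (E1 := dtrick HS Hext Hx1 H1).
     set (e0 := vadd X (vabs X a) (vopp X x0)).
     set (e1 := vadd X (vabs X a) (vopp X x1)).
     assert (He0 : vle X (vzero X) e0) by
       (apply (le_by (abs_ge x0)); rewrite E0; unfold e0; vring).
     assert (He1 : vle X (vzero X) e1) by
       (apply (le_by (abs_ge x1)); rewrite E1; unfold e1; vring).
     assert (Hs0 : vle X (vzero X) (vscal X (1 - t) e0)).
     { rewrite <- (scal0r X (1 - t)). apply vle_scal; auto; lra. }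
     assert (Hs1 : vle X (vzero X) (vscal X t e1)).
     { rewrite <- (scal0r X t). apply vle_scal; auto; lra. }
     assert (Hsum : vle X (vadd X (vscal X (1 - t) e0) (vscal X t e1)) (vzero X)).
     { apply (le_by H). unfold e0, e1, convex_comb. vring. }
     assert (Z0 := sum_nonneg_zero Hs0 Hs1 Hsum).
     rewrite vaddC in Hsum.
     assert (Z1 := sum_nonneg_zero Hs1 Hs0 Hsum).
     rewrite <- (scal0r X (1 - t)) in Z0. apply scal_cancel in Z0; [|lra].
     rewrite <- (scal0r X t) in Z1. apply scal_cancel in Z1; [|lra].
     split.
     * replace x0 with (vadd X (vabs X a) (vopp X e0)) by (unfold e0; vring).
       rewrite Z0. vring.
     * replace x1 with (vadd X (vabs X a) (vopp X e1)) by (unfold e1; vring).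
       rewrite Z1. vring.
 - intros [Haa Hoe]. split; auto.
   intros x0 x1 t Hx0 Hx1 Ht E.
   assert (Ax0 : A (vabs X x0)) by (apply (HS _ x0 Hx0); rewrite abs_abs; apply vle_refl).
   assert (Ax1 : A (vabs X x1)) by (apply (HS _ x1 Hx1); rewrite abs_abs; apply vle_refl).
   assert (Hle : vle X (vabs X a) (convex_comb X t (vabs X x0) (vabs X x1))).
   { rewrite E. unfold convex_comb. apply vle_trans with (1 := abs_tri _ _).
     rewrite !abs_scal, !Rabs_pos_eq by lra. apply vle_refl. }
   destruct (Hoe _ _ _ Ax0 Ax1 Ht Hle) as [Q0 Q1].
   set (u := vadd X x0 x1). set (v := vadd X x0 (vopp X x1)).
   set (k := Rabs (/2 - t)).
   assert (H1 : vle X (vabs X a) (vadd X (vscal X (/2) (vabs X u)) (vscal X k (vabs X v)))).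
   { replace a with (vadd X (vscal X (/2) u) (vscal X (/2 - t) v)) at 1
       by (rewrite E; unfold u, v, convex_comb; vring).
     apply vle_trans with (1 := abs_tri _ _). rewrite !abs_scal.
     rewrite (Rabs_pos_eq (/2)) by lra. apply vle_refl. }
   assert (K0 : vle X (vscal X 2 x0) (vscal X 2 (vabs X a))).
   { rewrite <- Q0. apply vle_scal; [lra|apply abs_ge]. }
   assert (K0' : vle X (vscal X 2 (vopp X x0)) (vscal X 2 (vabs X a))).
   { rewrite <- Q0. apply vle_scal; [lra|apply abs_geN]. }
   assert (K1 : vle X (vscal X 2 x1) (vscal X 2 (vabs X a))).
   { rewrite Q1. apply vle_scal; [lra|apply abs_ge]. }
   assert (K1' : vle X (vscal X 2 (vopp X x1)) (vscal X 2 (vabs X a))).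
   { rewrite Q1. apply vle_scal; [lra|apply abs_geN]. }
   assert (H2 : vle X (vadd X (vabs X u) (vabs X v)) (vscal X 2 (vabs X a))).
   { unfold vabs at 1. apply join_add_le.
     - rewrite vaddC. unfold vabs at 1. apply join_add_le.
       + apply (le_by K0). unfold u, v. vring.
       + apply (le_by K1). unfold u, v. vring.
     - rewrite vaddC. unfold vabs at 1. apply join_add_le.
       + apply (le_by K1'). unfold u, v. vring.
       + apply (le_by K0'). unfold u, v. vring. }
   assert (Hc : 0 < /2 - k).
   { unfold k, Rabs. destruct (Rcase_abs (/2 - t)); lra. }
   assert (H3 : vle X (vscal X (/2 - k) (vabs X v)) (vscal X (/2 - k) (vzero X))).
   { rewrite scal0r. apply (le_by (le_add2 H1 (@vle_scal X (/2) _ _ ltac:(lra) H2))). vring. }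
   apply le_scal_rev in H3; auto.
   apply abs_le0 in H3.
   assert (Ex : x0 = x1) by (replace x0 with (vadd X v x1) by (unfold v; vring); rewrite H3; vring).
   subst x1. split.
   + rewrite E. unfold convex_comb. vring.
   + rewrite E. unfold convex_comb. vring.
Qed.
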